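(* Let $S=\{p_1,\dots,p_n\}\subset\mathbb{R}^d$ and let $W\in\mathbb{R}^{n\times n}$ be its Gaussian affinity matrix, $W_{i,j}=\exp(-\|p_i-p_j\|^2/\sigma)$. Assume the sparsity assumption and the bounded doubling dimension assumption (with doubling dimension $d_0$) hold. Let $C_i=\|W_{:,i}\|^2$ be the squared Euclidean norm of the $i$-th column of $W$, $C_{\max}=\max_i C_i$ and $C_{\min}=\min_i C_i$. Then $$\frac{C_{\max}}{C_{\min}}\le (\log n)^{O(d_0)}.$$
   Context: $\sigma>0$ is a fixed user parameter (a distance threshold), treated as a constant. Sparsity assumption: for all $i\ne j$, $\|p_i-p_j\|\ge 0.1\,\sigma/\log n$. Bounded doubling dimension assumption: there is a constant $d_0$ such that for every $r>0$ and $\epsilon>0$, any ball of radius $r$ contains at most $O((r/\epsilon)^{d_0})$ points of $S$ that are pairwise at distance at least $\epsilon$. The constant in the exponent $O(d_0)$ depends only on the constants in these assumptions. *)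

(* Defs.v *)
From Stdlib Require Import Reals List.
Import ListNotations.
Open Scope R_scope.

Fixpoint rsum (f : nat -> R) (n : nat) : R :=
  match n with
  | O => 0
  | S m => rsum f m + f m
  end.

(* A point of R^d is a function nat -> R whose coordinates 0..d-1 matter. *)
Definition pt := nat -> R.

Definition dist2 (d : nat) (x y : pt) : R :=
  rsum (fun k => (x k - y k) ^ 2) d.

Definition dist (d : nat) (x y : pt) : R := sqrt (dist2 d x y).

Definition W (sigma : R) (d : nat) (p : nat -> pt) (i j : nat) : R :=
  exp (- dist2 d (p i) (p j) / sigma).

Definition Ccol (sigma : R) (d n : nat) (p : nat -> pt) (i : nat) : R :=
  rsum (fun j => (W sigma d p j i) ^ 2) n.

(* max / min over i in {0,...,n-1} (n >= 1) *)
Definition Cmax (sigma : R) (d n : nat) (p : nat -> pt) : R :=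
  fold_right Rmax (Ccol sigma d n p 0%nat) (map (Ccol sigma d n p) (seq 0 n)).
Definition Cmin (sigma : R) (d n : nat) (p : nat -> pt) : R :=
  fold_right Rmin (Ccol sigma d n p 0%nat) (map (Ccol sigma d n p) (seq 0 n)).

Definition sparse (sigma : R) (d n : nat) (p : nat -> pt) : Prop :=
  forall i j, (i < n)%nat -> (j < n)%nat -> i <> j ->
    dist d (p i) (p j) >= (1/10) * sigma / ln (INR n).

Definition doubling (K d0 : R) (d n : nat) (p : nat -> pt) : Prop :=
  forall (x : pt) (r eps : R) (A : list nat),
    0 < eps -> eps <= r ->
    NoDup A ->
    (forall i, In i A -> (i < n)%nat /\ dist d (p i) x <= r) ->
    (forall i j, In i A -> In j A -> i <> j -> dist d (p i) (p j) >= eps) ->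
    INR (length A) <= K * Rpower (r / eps) d0.

(* Main.v *)
Require Import Defs.
From Stdlib Require Import Reals List Lra Lia.
Open Scope R_scope.

Lemma exp_le' : forall x y, x <= y -> exp x <= exp y.
Proof. intros x y H; destruct (Rle_lt_or_eq_dec _ _ H) as [h|h];
  [left; apply exp_increasing; auto | subst; lra]. Qed.

Lemma rsum_nonneg : forall f n, (forall j, 0 <= f j) -> 0 <= rsum f n.
Proof. intros f n H; induction n; simpl; [lra | specialize (H n); lra]. Qed.

Lemma rsum_ge_term : forall f n i, (forall j, 0 <= f j) -> (i < n)%nat -> f i <= rsum f n.
Proof.
  intros f n i H; induction n; intros Hi; [lia|]. simpl.
  destruct (Nat.eq_dec i n) as [->|Hne].
  - pose proof (rsum_nonneg f n H); lra.
  - assert (i < n)%nat by lia. specialize (IHn H0). specialize (H n); lra.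
Qed.

Lemma rsum_le : forall f g n, (forall j, (j < n)%nat -> f j <= g j) -> rsum f n <= rsum g n.
Proof.
  intros f g n; induction n; intros H; simpl; [lra|].
  assert (rsum f n <= rsum g n) by (apply IHn; intros; apply H; lia).
  specialize (H n ltac:(lia)); lra.
Qed.

Lemma rsum_split : forall (b : nat -> bool) e n, 0 <= e ->
  rsum (fun j => if b j then 1 else e) n <= INR (length (filter b (seq 0 n))) + INR n * e.
Proof.
  intros b e n He; induction n; [simpl; lra|]. cbn [rsum].
  rewrite seq_S, filter_app, length_app, plus_INR, S_INR. simpl.
  destruct (b n); simpl; lra.
Qed.

Lemma dist2_nonneg : forall d x y, 0 <= dist2 d x y.
Proof. intros; unfold dist2; apply rsum_nonneg; intros; apply pow2_ge_0. Qed.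

Lemma dist2_self : forall d x, dist2 d x x = 0.
Proof. intros; unfold dist2; induction d; cbn [rsum]; [lra|]. rewrite IHd. ring. Qed.

Lemma fold_max_le : forall (l : list R) init B,
  init <= B -> (forall x, In x l -> x <= B) -> fold_right Rmax init l <= B.
Proof.
  induction l; intros init B Hi H; simpl; auto.
  apply Rmax_lub; [apply H; simpl; auto | apply IHl; auto; intros; apply H; simpl; auto].
Qed.

Lemma fold_min_ge : forall (l : list R) init B,
  B <= init -> (forall x, In x l -> B <= x) -> B <= fold_right Rmin init l.
Proof.
  induction l; intros init B Hi H; simpl; auto.
  apply Rmin_glb; [apply H; simpl; auto | apply IHl; auto; intros; apply H; simpl; auto].
Qed.

Lemma W2_nonneg : forall sigma d p j i, 0 <= (W sigma d p j i) ^ 2.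
Proof. intros; apply pow2_ge_0. Qed.

Lemma Ccol_ge1 : forall sigma d n p i, (i < n)%nat -> 1 <= Ccol sigma d n p i.
Proof.
  intros. unfold Ccol.
  eapply Rle_trans; [|apply (rsum_ge_term (fun j => W sigma d p j i ^ 2) n i); auto].
  - unfold W. rewrite dist2_self. replace (- 0 / sigma) with 0 by (unfold Rdiv; ring).
    rewrite exp_0. lra.
  - intros; apply W2_nonneg.
Qed.

Theorem mainTheorem1 :
  forall (sigma K : R), 0 < sigma -> 0 < K ->
  exists c : R, 0 < c /\
  forall d0 : R, 0 < d0 ->
  exists N : nat,
  forall (n d : nat) (p : nat -> pt),
    (N <= n)%nat ->
    sparse sigma d n p ->
    doubling K d0 d n p ->
    Cmax sigma d n p / Cmin sigma d n p <= Rpower (ln (INR n)) (c * d0).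
Proof.
  intros sigma K Hs HK. exists 4. split; [lra|]. intros d0 Hd0.
  set (T := 1 + sigma + 10 / sigma + Rpower (K + 1) (1 / d0)).
  assert (HT1 : 1 + sigma + 10/sigma <= T).
  { unfold T; pose proof (exp_pos ((1/d0) * ln (K+1))); unfold Rpower; lra. }
  destruct (INR_unbounded (exp T)) as [N HN].
  exists N. intros n d p HNn Hsp Hdb.
  assert (HnN : INR N <= INR n) by (apply le_INR; auto).
  assert (HexpT : 0 < exp T) by apply exp_pos.
  assert (Hnpos : 0 < INR n) by lra.
  set (L := ln (INR n)).
  assert (HLT : T < L).
  { unfold L. rewrite <- (ln_exp T). apply ln_increasing; lra. }
  assert (Hs10 : 0 < 10 / sigma) by (unfold Rdiv; apply Rmult_lt_0_compat; [lra| apply Rinv_0_lt_compat; lra]).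
  assert (HL1 : 1 < L) by lra.
  assert (HLs : sigma < L) by lra.
  assert (HL10 : 10 / sigma < L) by lra.
  assert (HLK : K + 1 <= Rpower L d0).
  { assert (Rpower (K + 1) (1 / d0) <= L).
    { unfold T in HLT. lra. }
    assert (E : Rpower (Rpower (K + 1) (1 / d0)) d0 = K + 1).
    { rewrite Rpower_mult. replace (1 / d0 * d0) with 1 by (field; lra). apply Rpower_1; lra. }
    rewrite <- E. apply Rle_Rpower_l; [lra|split; auto].
    unfold Rpower; apply exp_pos. }
  set (e := / INR n).
  assert (Hne : INR n * e = 1) by (unfold e; field; lra).
  assert (He0 : 0 < e) by (unfold e; apply Rinv_0_lt_compat; lra).
  assert (HeL : e = exp (- L)) by (unfold e, L; rewrite exp_Ropp, exp_ln; auto).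
  assert (Hcol : forall i, (i < n)%nat -> Ccol sigma d n p i <= K * Rpower L (3 * d0) + 1).
  { intros i Hi.
    set (b := fun j => if Rle_dec (Defs.dist d (p j) (p i)) L then true else false).
    unfold Ccol.
    eapply Rle_trans.
    { apply (rsum_le _ (fun j => if b j then 1 else e)).
      intros j Hj. unfold b, W.
      assert (Hsq : exp (- dist2 d (p j) (p i) / sigma) ^ 2 = exp (-(2 * dist2 d (p j) (p i)) / sigma)).
      { simpl. rewrite Rmult_1_r, <- exp_plus. f_equal. field. lra. }
      rewrite Hsq. pose proof (dist2_nonneg d (p j) (p i)) as Hx.
      assert (Hsi : 0 < / sigma) by (apply Rinv_0_lt_compat; lra).
      assert (Hsi1 : sigma * / sigma = 1) by (field; lra).
      destruct (Rle_dec (Defs.dist d (p j) (p i)) L) as [h|h].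
      - rewrite <- exp_0. apply exp_le'. unfold Rdiv. nra.
      - rewrite HeL. apply exp_le'. apply Rnot_le_lt in h.
        unfold Defs.dist in h. pose proof (sqrt_sqrt _ Hx) as Hq.
        assert (HxL : L * L < dist2 d (p j) (p i)) by nra.
        unfold Rdiv. nra. }
    eapply Rle_trans; [apply rsum_split; lra|]. rewrite Hne.
    apply Rplus_le_compat_r.
    set (eps := (1/10) * sigma / L).
    assert (Heps : 0 < eps) by (unfold eps; unfold Rdiv; apply Rmult_lt_0_compat; [lra| apply Rinv_0_lt_compat; lra]).
    assert (HLi : L * / L = 1) by (field; lra).
    assert (HepsL : eps <= L).
    { unfold eps, Rdiv. assert (0 < / L) by (apply Rinv_0_lt_compat; lra). nra. }
    eapply Rle_trans.
    { apply (Hdb (p i) L eps (filter b (seq 0 n))); auto.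
      - apply NoDup_filter, seq_NoDup.
      - intros k Hk. apply filter_In in Hk. destruct Hk as [Hk1 Hk2].
        apply in_seq in Hk1. split; [lia|]. unfold b in Hk2.
        destruct (Rle_dec (Defs.dist d (p k) (p i)) L); [auto|discriminate].
      - intros k l Hk Hl Hkl. apply filter_In in Hk. apply filter_In in Hl.
        destruct Hk as [Hk _]. destruct Hl as [Hl _].
        apply in_seq in Hk. apply in_seq in Hl.
        apply Hsp; auto; lia. }
    apply Rmult_le_compat_l; [lra|].
    assert (HLe : L / eps <= L ^ 3).
    { unfold eps. replace (L / (1 / 10 * sigma / L)) with ((10 / sigma) * (L * L)) by (field; lra).
      simpl. nra. }
    replace (3 * d0) with (INR 3 * d0) by (simpl; ring).
    rewrite <- Rpower_mult, Rpower_pow by lra.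
    apply Rle_Rpower_l; [lra|]. split; auto.
    unfold Rdiv; apply Rmult_lt_0_compat; [lra| apply Rinv_0_lt_compat; lra]. }
  assert (Hn0 : (0 < n)%nat) by (destruct n; simpl in Hnpos; lra || lia).
  assert (HCmax : Cmax sigma d n p <= K * Rpower L (3 * d0) + 1).
  { unfold Cmax. apply fold_max_le; [apply Hcol; auto|].
    intros x Hx. apply in_map_iff in Hx as [k [<- Hk]]. apply in_seq in Hk. apply Hcol; lia. }
  assert (HCmax1 : 1 <= Cmax sigma d n p).
  { unfold Cmax. pose proof (Ccol_ge1 sigma d n p 0 Hn0).
    destruct n; [lia|]. simpl. eapply Rle_trans; [|apply Rmax_l]. auto. }
  assert (HCmin : 1 <= Cmin sigma d n p).
  { unfold Cmin. apply fold_min_ge; [apply Ccol_ge1; auto|].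
    intros x Hx. apply in_map_iff in Hx as [k [<- Hk]]. apply in_seq in Hk. apply Ccol_ge1; lia. }
  assert (H3 : 1 <= Rpower L (3 * d0)).
  { rewrite <- (Rpower_O L) by lra. apply Rle_Rpower; lra. }
  replace (4 * d0) with (d0 + 3 * d0) by ring. rewrite Rpower_plus.
  assert (Hci : 0 < / Cmin sigma d n p) by (apply Rinv_0_lt_compat; lra).
  assert (Hci1 : Cmin sigma d n p * / Cmin sigma d n p = 1) by (field; lra).
  assert (Hinv : / Cmin sigma d n p <= 1) by nra.
  assert (Hq : Cmax sigma d n p * / Cmin sigma d n p <= Cmax sigma d n p) by nra.
  assert (Hr : K * Rpower L (3 * d0) + 1 <= (K + 1) * Rpower L (3 * d0)) by nra.
  assert (Hr2 : (K + 1) * Rpower L (3 * d0) <= Rpower L d0 * Rpower L (3 * d0)) by nra.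
  unfold Rdiv. lra.
Qed.
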